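(* Let $k$ be an algebraically closed field, $\Lambda$ a connected locally bounded $k$-category, and $G$ a group of $k$-linear automorphisms of $\Lambda$ which acts freely on $[\mathrm{ind}\Lambda]$. Let $L$ be a line in $\Lambda$ and $B_L$ its associated $\Lambda$-module. Then $G_L=G_{B_L}$.
   Context: A locally bounded $k$-category: endomorphism algebras local, distinct objects non-isomorphic, and for each object $x$, $\sum_y\dim_k\Lambda(x,y)<\infty$, $\sum_y\dim_k\Lambda(y,x)<\infty$. A $\Lambda$-module is a contravariant $k$-linear functor $\Lambda\to\mathrm{MOD}\,k$; $\mathrm{supp}M$ is the full subcategory of objects $x$ with $M(x)\neq0$. $[\mathrm{ind}\Lambda]$ is the set of isomorphism classes of finite dimensional indecomposable $\Lambda$-modules; for $g\in G$, ${}^gM=M\circ g^{-1}$; $G$ acts freely on $[\mathrm{ind}\Lambda]$ if ${}^gM\not\cong M$ for every indecomposable finite dimensional $M$ and $1\neq g\in G$. A full subcategory $L$ is convex if each path in the ordinary quiver of $\Lambda$ with source and terminal in $L$ has all its points in $L$. A line is a convex full subcategory isomorphic to the path category of a linear quiver (of type $A_n$, $A_\infty$ or $A_\infty^\infty$). For a line $L$, $B_L$ is the $\Lambda$-module with $B_L(x)=k$ for $x\in L$, $B_L(\alpha)\neq0$ for every nonzero morphism $\alpha$ of $L$, and $B_L(x)=0$ for $x\notin L$ (unique up to isomorphism). $G_L=\{g\in G\mid gL=L\}$ and $G_M=\{g\in G\mid {}^gM\cong M\}$. *)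

(* Defs.v *)
From HB Require Import structures.
From mathcomp Require Import all_boot all_order all_algebra.
From Stdlib Require Import Relation_Operators.
From Stdlib Require List.
Set Implicit Arguments.
Unset Strict Implicit.
Unset Printing Implicit Defensive.
Import GRing.Theory.
Local Open Scope ring_scope.

Record kcat (k : fieldType) := KCat {
  obj : Type;
  hom : obj -> obj -> vectType k;
  comp : forall x y z, hom y z -> hom x y -> hom x z;
  idm : forall x, hom x x;
  comp_linl : forall x y z (a : k) (g g' : hom y z) (f : hom x y),
      comp (a *: g + g') f = a *: comp g f + comp g' f;
  comp_linr : forall x y z (a : k) (g : hom y z) (f f' : hom x y),
      comp g (a *: f + f') = a *: comp g f + comp g f';
  compA : forall x y z w (h : hom z w) (g : hom y z) (f : hom x y),
      comp h (comp g f) = comp (comp h g) f;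
  comp_idl : forall x y (f : hom x y), comp (idm y) f = f;
  comp_idr : forall x y (f : hom x y), comp f (idm x) = f
}.
Arguments comp {k C x y z} : rename.
Arguments idm {k C} : rename.
Arguments hom {k} C : rename.
Arguments obj {k} C : rename.

Section Cat.
Variables (k : fieldType) (C : kcat k).

Definition is_iso x y (f : hom C x y) :=
  exists g : hom C y x, comp g f = idm x /\ comp f g = idm y.

Definition local_endo (x : obj C) :=
  idm x != 0 /\ forall f : hom C x x, is_iso f \/ is_iso (idm x - f).

Definition locally_bounded :=
  (forall x : obj C, local_endo x) /\
  (forall x y (f : hom C x y) (g : hom C y x),
      comp g f = idm x -> comp f g = idm y -> x = y) /\
  (* sum_y dim Lambda(x,y) < oo and sum_y dim Lambda(y,x) < oo *)
  (forall x, exists s : seq (obj C), forall y,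
      (\dim (fullv : {vspace hom C x y}) != 0)%N -> List.In y s) /\
  (forall x, exists s : seq (obj C), forall y,
      (\dim (fullv : {vspace hom C y x}) != 0)%N -> List.In y s).

Definition connected :=
  inhabited (obj C) /\
  forall x y, clos_refl_sym_trans (obj C)
                (fun a b => exists f : hom C a b, f != 0) x y.

Definition rad x y (f : hom C x y) :=
  forall g : hom C y x, is_iso (idm x - comp g f).

Definition rad2 x y (f : hom C x y) :=
  exists s : seq {z : obj C & (hom C x z * hom C z y)%type},
    List.Forall (fun t => rad (tagged t).1 /\ rad (tagged t).2) s /\
    f = \sum_(t <- s) comp (tagged t).2 (tagged t).1.

(* arrow x -> y of the ordinary quiver: rad(x,y) <> rad^2(x,y) *)
Definition qarrow x y := exists f : hom C x y, rad f /\ ~ rad2 f.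

Fixpoint qpath (x : obj C) (s : seq (obj C)) : Prop :=
  match s with
  | [::] => True
  | y :: s' => qarrow x y /\ qpath y s'
  end.

Definition convex (L : obj C -> Prop) :=
  forall x s, qpath x s -> L x -> L (last x s) ->
    forall z, List.In z (x :: s) -> L z.

Inductive lshape := An of nat | Ainf | Ainfinf.

Definition lvert (sh : lshape) (i : int) : Prop :=
  match sh with
  | An n => (0 <= i)%R /\ (i < n%:Z)%R
  | Ainf => (0 <= i)%R
  | Ainfinf => True
  end.

Definition lshape_ok sh := match sh with An n => (0 < n)%N | _ => true end.

(* orientation o i = true : arrow i -> i+1 ; false : arrow i+1 -> i.
   pathb o a b : there is a (unique) path from a to b. *)
Definition pathb (o : int -> bool) (a b : int) : bool :=
  if (a <= b)%R then all (fun i : nat => o (a + i%:Z)%R) (iota 0 `|b - a|%N)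
  else all (fun i : nat => ~~ o (b + i%:Z)%R) (iota 0 `|a - b|%N).

(* Hom spaces of the path category kQ: k if there is a path, 0 otherwise *)
Definition qhom (o : int -> bool) (a b : int) := 'rV[k]_(pathb o a b).

Definition qcomp o a b c (g : qhom o b c) (f : qhom o a b) : qhom o a c :=
  \row_(j < pathb o a c)
     (\sum_(i < pathb o b c) \sum_(i' < pathb o a b) g 0 i * f 0 i').

Definition qid o a : qhom o a a := const_mx 1.

Definition klinear (U V : lmodType k) (F : U -> V) :=
  forall (c : k) u v, F (c *: u + v) = c *: F u + F v.

(* L is a line: convex full subcategory isomorphic (as k-category) to the
   path category of a linear quiver of type A_n, A_oo or A_oo^oo. *)
Definition is_line (L : obj C -> Prop) :=
  convex L /\
  exists (sh : lshape) (o : int -> bool) (phi : obj C -> int)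
         (F : forall x y, hom C x y -> qhom o (phi x) (phi y)),
    lshape_ok sh /\
    (forall x, L x -> lvert sh (phi x)) /\
    (forall x y, L x -> L y -> phi x = phi y -> x = y) /\
    (forall i, lvert sh i -> exists x, L x /\ phi x = i) /\
    (forall x y, L x -> L y -> klinear (F x y) /\ bijective (F x y)) /\
    (forall x y z (g : hom C y z) (f : hom C x y), L x -> L y -> L z ->
        F x z (comp g f) = qcomp (F y z g) (F x y f)) /\
    (forall x, L x -> F x x (idm x) = qid o (phi x)).

Record kfun := KFun {
  fobj : obj C -> obj C;
  fmor : forall x y, hom C x y -> hom C (fobj x) (fobj y)
}.

Definition is_kauto (F : kfun) :=
  bijective (fobj F) /\
  (forall x y, klinear (@fmor F x y) /\ bijective (@fmor F x y)) /\
  (forall x y z (g : hom C y z) (f : hom C x y),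
      fmor F (comp g f) = comp (fmor F g) (fmor F f)) /\
  (forall x, fmor F (idm x) = idm (fobj F x)).

Definition kfun_comp (F H : kfun) : kfun :=
  KFun (fun x y f => fmor F (fmor H f) : hom C (fobj F (fobj H x)) (fobj F (fobj H y))).

Definition kfun_id : kfun := KFun (fun x y (f : hom C x y) => f).

(* equality of functors: equal as maps on the set of all morphisms *)
Definition kfun_eq (F H : kfun) :=
  forall x y (f : hom C x y),
    existT (fun p : obj C * obj C => hom C p.1 p.2) (fobj F x, fobj F y) (fmor F f)
  = existT (fun p : obj C * obj C => hom C p.1 p.2) (fobj H x, fobj H y) (fmor H f).

Record premod := PreMod {
  mval : obj C -> vectType k;
  mact : forall x y, hom C x y -> mval y -> mval x
}.

Arguments mact p {x y}.
Arguments mval p.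
Arguments fmor _ {x y}.
Definition is_module (M : premod) :=
  (forall x y (f : hom C x y), klinear (@mact M x y f)) /\
  (forall x y (a : k) (f f' : hom C x y) v,
      mact M (a *: f + f') v = a *: mact M f v + mact M f' v) /\
  (forall x y z (g : hom C y z) (f : hom C x y) v,
      mact M (comp g f) v = mact M f (mact M g v)) /\
  (forall x v, mact M (idm x) v = v).

Definition mod_iso (M N : premod) :=
  exists phi : forall x, mval M x -> mval N x,
    (forall x, klinear (phi x) /\ bijective (phi x)) /\
    (forall x y (f : hom C x y) (v : mval M y),
        phi x (mact M f v) = mact N f (phi y v)).

Definition twist (M : premod) (F : kfun) : premod :=
  PreMod (fun x y (f : hom C x y) => mact M (fmor F f)
            : mval M (fobj F y) -> mval M (fobj F x)).

Definition mod_fin_dim (M : premod) :=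
  exists s : seq (obj C), forall x,
    (\dim (fullv : {vspace mval M x}) != 0)%N -> List.In x s.

Definition indecomposable (M : premod) :=
  (exists x, (\dim (fullv : {vspace mval M x}) != 0)%N) /\
  forall U V : forall x, {vspace mval M x},
    (forall x y (f : hom C x y) v, v \in U y -> mact M f v \in U x) ->
    (forall x y (f : hom C x y) v, v \in V y -> mact M f v \in V x) ->
    (forall x, (U x + V x)%VS = fullv /\ (U x :&: V x)%VS = 0%VS) ->
    (forall x, U x = 0%VS) \/ (forall x, V x = 0%VS).

Definition is_BL (L : obj C -> Prop) (B : premod) :=
  is_module B /\
  (forall x, L x -> \dim (fullv : {vspace mval B x}) = 1%N) /\
  (forall x, ~ L x -> \dim (fullv : {vspace mval B x}) = 0%N) /\
  (forall x y (f : hom C x y), L x -> L y -> f != 0 ->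
      exists v, mact B f v != 0).

End Cat.

Record autgroup (k : fieldType) (C : kcat k) := AutGroup {
  gT : Type;
  gmul : gT -> gT -> gT;
  gone : gT;
  ginv : gT -> gT;
  gmulA : forall a b c, gmul a (gmul b c) = gmul (gmul a b) c;
  gmul1 : forall a, gmul gone a = a;
  gmulV : forall a, gmul (ginv a) a = gone;
  gact : gT -> kfun C;
  gact_auto : forall g, is_kauto (gact g);
  gact_mul : forall g h, kfun_eq (gact (gmul g h)) (kfun_comp (gact g) (gact h));
  gact_one : kfun_eq (gact gone) (@kfun_id _ C);
  gact_faithful : forall g, kfun_eq (gact g) (@kfun_id _ C) -> g = gone
}.

Section Act.
Variables (k : fieldType) (C : kcat k) (G : autgroup C).

Definition gtwist (g : gT G) (M : premod C) := twist M (gact (ginv g)).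

Definition acts_freely_on_ind :=
  forall M : premod C, is_module M -> mod_fin_dim M -> indecomposable M ->
    forall g : gT G, g <> gone G -> ~ mod_iso (gtwist g M) M.

Definition stab_line (L : obj C -> Prop) (g : gT G) :=
  forall y, L y <-> exists x, L x /\ fobj (gact g) x = y.

Definition stab_mod (M : premod C) (g : gT G) := mod_iso (gtwist g M) M.
End Act.

(* Main.v *)
Require Import Defs.
From mathcomp Require Import all_boot all_order all_algebra.
From mathcomp Require Import zify ring.
From Stdlib Require Import ClassicalEpsilon Classical.
Set Implicit Arguments. Unset Strict Implicit. Unset Printing Implicit Defensive.
Import GRing.Theory.
Local Open Scope ring_scope.

Section Vec.
Variables (k : fieldType) (V : vectType k).

Definition cf (b v : V) : k := coord [tuple b] 0 v.

Lemma cfD (b u v : V) : cf b (u + v) = cf b u + cf b v.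
Proof. by rewrite /cf linearD. Qed.
Lemma cfZ (b v : V) (c : k) : cf b (c *: v) = c * cf b v.
Proof. by rewrite /cf linearZ. Qed.
Lemma cf0 (b : V) : cf b 0 = 0.
Proof. by rewrite /cf linear0. Qed.

Lemma cf_self (b : V) : b != 0 -> cf b b = 1.
Proof.
move=> nz; have fr : free [tuple b] by rewrite /= seq1_free.
by have := @coord_free _ _ 1 [tuple b] 0 0 fr.
Qed.

Lemma cf_exp (b v : V) : b != 0 -> \dim (fullv : {vspace V}) = 1%N ->
  v = cf b v *: b.
Proof.
move=> nz d1.
have sp : v \in <<[tuple b]>>%VS.
  have -> : <<[tuple b]>>%VS = fullv.
    apply/eqP; rewrite eqEdim subvf /= span_seq1 dim_vline nz d1 //.
  by rewrite memvf.
by rewrite {1}(coord_span sp) big_ord1.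
Qed.

Lemma dim0_eq0 (v : V) : \dim (fullv : {vspace V}) = 0%N -> v = 0.
Proof.
move=> d0; have h : (fullv : {vspace V}) = 0%VS by apply/eqP; rewrite -dimv_eq0 d0.
by apply/eqP; rewrite -memv0 -h memvf.
Qed.

Lemma dim1_pick : \dim (fullv : {vspace V}) = 1%N -> vpick (fullv : {vspace V}) != 0.
Proof.
move=> d1; rewrite vpick0 -dimv_eq0 d1 //.
Qed.
End Vec.
Lemma allI (P : int -> bool) (a : int) (n : nat) :
  all (fun m : nat => P (a + m%:Z)) (iota 0 n) <->
  (forall m : int, a <= m -> m < a + n%:Z -> P m).
Proof.
split.
  move/allP=> h m h1 h2.
  have e : m = a + (`|m - a|%N)%:Z by lia.
  rewrite e; apply: h; rewrite mem_iota; lia.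
move=> h; apply/allP => m; rewrite mem_iota => /andP[_ hm]; apply: h; lia.
Qed.

Lemma pathb_char (o : int -> bool) (a b : int) :
  pathb o a b <-> (forall m, a <= m -> m < b -> o m) /\
                  (forall m, b <= m -> m < a -> ~~ o m).
Proof.
rewrite /pathb; case: ifP => hab.
  rewrite allI; have -> : a + (`|b - a|%N)%:Z = b by lia.
  split; [move=> h; split => //; move=> m *; lia | by case].
rewrite (allI (fun x => ~~ o x)); have -> : b + (`|a - b|%N)%:Z = a by lia.
split; [move=> h; split => //; move=> m *; lia | by case].
Qed.
Section Rows.
Variable k : fieldType.
Definition sc n (u : 'rV[k]_n) : k := \sum_j u 0 j.

Lemma row_n0 n (u : 'rV[k]_n) : n = 0%N -> u = 0.
Proof. by move=> e; subst n; apply/rowP => -[]. Qed.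

Lemma row_n1 n (u : 'rV[k]_n) : n = 1%N -> u = sc u *: const_mx 1.
Proof.
move=> e; subst n; apply/rowP => j; rewrite /sc big_ord1 !mxE mulr1.
by rewrite (ord1 j).
Qed.

Lemma const1_nz n : n = 1%N -> (const_mx 1 : 'rV[k]_n) != 0.
Proof.
move=> e; subst n; apply/eqP => /rowP /(_ 0); rewrite !mxE => /eqP.
by rewrite oner_eq0.
Qed.

Lemma qcomp_one (o : int -> bool) a b c :
  pathb o a b -> pathb o b c ->
  qcomp (const_mx 1 : qhom k o b c) (const_mx 1 : qhom k o a b) = const_mx 1.
Proof.
move=> hab hbc; apply/rowP => j; rewrite !mxE.
under eq_bigr do under eq_bigr do rewrite !mxE mulr1.
by rewrite !sumr_const !card_ord hab hbc.
Qed.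
End Rows.

Notation mac M f := (@mact _ _ M _ _ f).

Section Mod.
Variables (k : fieldType) (C : kcat k) (M : premod C).
Hypothesis hM : is_module M.

Lemma mact_f0 x y (f : Defs.hom C x y) : mac M f 0 = 0.
Proof.
case: hM => lin _; have := lin x y f 1 0 0; rewrite !scale1r addr0 => h.
by apply: (@addrI _ (mac M f 0)); rewrite addr0 -h.
Qed.

Lemma mactZ x y (f : Defs.hom C x y) c v : mac M f (c *: v) = c *: mac M f v.
Proof. by case: hM => lin _; have := lin x y f c v 0; rewrite !addr0 mact_f0 addr0. Qed.

Lemma mact_0f x y (v : mval M y) : mac M (0 : Defs.hom C x y) v = 0.
Proof.
case: hM => _ [lin _]; have := lin x y 1 0 0 v; rewrite !scale1r addr0 => h.
by apply: (@addrI _ (mac M (0 : Defs.hom C x y) v)); rewrite addr0 -h.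
Qed.

Lemma mact_Zf x y (f : Defs.hom C x y) c v : mac M (c *: f) v = c *: mac M f v.
Proof. by case: hM => _ [lin _]; have := lin x y c f 0 v; rewrite !addr0 mact_0f addr0. Qed.

Lemma mact_comp x y z (g : Defs.hom C y z) (f : Defs.hom C x y) v :
  mac M (Defs.comp g f) v = mac M f (mac M g v).
Proof. by case: hM => _ [_ [h _]]. Qed.

Lemma mact_id x v : mac M (idm x) v = v.
Proof. by case: hM => _ [_ [_ h]]. Qed.
End Mod.

Section BL.
Variables (k : fieldType) (C : kcat k) (L : obj C -> Prop) (M : premod C).
Hypothesis hM : is_BL L M.

Definition bv (x : obj C) := vpick (fullv : {vspace mval M x}).
Definition beta x y (f : Defs.hom C x y) := cf (bv x) (mac M f (bv y)).

Let hmod : is_module M. Proof. by case: hM. Qed.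

Lemma bv_nz x : L x -> bv x != 0.
Proof. by case: hM => _ [h _] Lx; apply: dim1_pick; apply: h. Qed.

Lemma vexp x (v : mval M x) : L x -> v = cf (bv x) v *: bv x.
Proof. by case: hM => _ [h _] Lx; apply: cf_exp; [apply: bv_nz | apply: h]. Qed.

Lemma vnL x (v : mval M x) : ~ L x -> v = 0.
Proof. by case: hM => _ [_ [h _]] Lx; apply: dim0_eq0; apply: h. Qed.

Lemma mac_b x y (f : Defs.hom C x y) : L x -> mac M f (bv y) = beta f *: bv x.
Proof. by move=> Lx; apply: vexp. Qed.

Lemma beta_Z x y (f : Defs.hom C x y) c : beta (c *: f) = c * beta f.
Proof. by rewrite /beta mact_Zf // cfZ. Qed.

Lemma beta_comp x y z (g : Defs.hom C y z) (f : Defs.hom C x y) :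
  L x -> L y -> beta (Defs.comp g f) = beta f * beta g.
Proof.
move=> Lx Ly; rewrite /beta mact_comp // (mac_b g Ly) mactZ // (mac_b f Lx).
by rewrite !cfZ !cf_self ?mulr1 ?bv_nz // mulrC. Qed.

Lemma beta_id x : L x -> beta (idm x) = 1.
Proof. by move=> Lx; rewrite /beta mact_id // cf_self // bv_nz. Qed.

Lemma beta_nz x y (f : Defs.hom C x y) : L x -> L y -> f != 0 -> beta f != 0.
Proof.
move=> Lx Ly fnz; case: hM => _ [_ [_ h]]; have [v hv] := h x y f Lx Ly fnz.
apply/eqP => b0; move: hv; rewrite (vexp v Ly) mactZ // mac_b // b0 scale0r scaler0.
by rewrite eqxx.
Qed.
End BL.

Lemma lvert_int sh (a b m : int) : lvert sh a -> lvert sh b -> a <= m -> m <= b -> lvert sh m.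
Proof. case: sh => [n||] /=; lia. Qed.

Lemma exists_r (k : fieldType) (e : int -> k) : (forall i, e i != 0) ->
  exists r : int -> k, (forall i, r i != 0) /\ (forall i, r (i + 1) = r i * e i).
Proof.
move=> he.
pose r (i : int) := match i with
  | Posz n => \prod_(m < n) e (m%:Z)
  | Negz n => \prod_(m < n.+1) (e (- (m.+1)%:Z))^-1 end.
exists r; split.
  case=> n /=; rewrite prodf_seq_neq0; apply/allP => j _ /=; by rewrite ?invr_neq0 ?he.
case=> [n|[|n]].
- have -> : Posz n + 1 = Posz n.+1 by lia.
  by rewrite /= big_ord_recr.
- have -> : Negz 0 + 1 = Posz 0 by lia.
  by rewrite /= big_ord0 big_ord1 NegzE mulVf.
- have -> : Negz n.+1 + 1 = Negz n by lia.
  rewrite /= [in RHS]big_ord_recr /= NegzE -mulrA mulVf ?mulr1 //.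
Qed.

Section Line.
Variables (k : fieldType) (C : kcat k) (L : obj C -> Prop) (sh : lshape)
  (o : int -> bool) (ph : obj C -> int)
  (F : forall x y, Defs.hom C x y -> qhom k o (ph x) (ph y)).
Hypotheses (hvert : forall x, L x -> lvert sh (ph x))
  (hinj : forall x y, L x -> L y -> ph x = ph y -> x = y)
  (hsurj : forall i, lvert sh i -> exists x, L x /\ ph x = i)
  (hF : forall x y, L x -> L y -> klinear (@F x y) /\ bijective (@F x y))
  (hcomp : forall x y z (g : Defs.hom C y z) (f : Defs.hom C x y), L x -> L y -> L z ->
        @F x z (Defs.comp g f) = qcomp (@F y z g) (@F x y f))
  (hid : forall x, L x -> @F x x (idm x) = qid k o (ph x)).

Lemma F0 x y : L x -> L y -> @F x y 0 = 0.
Proof.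
move=> Lx Ly; have [lin _] := hF Lx Ly; have := lin 1 0 0; rewrite !scale1r addr0 => h.
by apply: (@addrI _ (@F x y 0)); rewrite addr0 -h.
Qed.

Lemma FZ x y c f : L x -> L y -> @F x y (c *: f) = c *: @F x y f.
Proof. by move=> Lx Ly; have [lin _] := hF Lx Ly; have := lin c f 0; rewrite !addr0 F0 // addr0. Qed.

Lemma Finj x y f g : L x -> L y -> @F x y f = @F x y g -> f = g.
Proof. by move=> Lx Ly; have [_ /bij_inj] := hF Lx Ly; apply. Qed.

Lemma hom_zero x y (f : Defs.hom C x y) : L x -> L y -> ~~ pathb o (ph x) (ph y) -> f = 0.
Proof.
move=> Lx Ly np; apply: (Finj Lx Ly); rewrite F0 //.
by apply: row_n0; move: np; case: pathb.
Qed.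

Lemma hom_one x y : L x -> L y -> exists h : Defs.hom C x y, @F x y h = const_mx 1.
Proof.
move=> Lx Ly; have [_ [g _ gK]] := hF Lx Ly; by exists (g (const_mx 1)).
Qed.

Lemma hom_scal x y (f h : Defs.hom C x y) : L x -> L y -> pathb o (ph x) (ph y) ->
  @F x y h = const_mx 1 -> f = sc (@F x y f) *: h.
Proof.
move=> Lx Ly p Fh; apply: (Finj Lx Ly); rewrite FZ // Fh.
by apply: row_n1; rewrite p.
Qed.

Lemma h_nz x y (h : Defs.hom C x y) : L x -> L y -> pathb o (ph x) (ph y) ->
  @F x y h = const_mx 1 -> h != 0.
Proof.
move=> Lx Ly p Fh; apply/eqP => h0.
have nz : (const_mx 1 : 'rV[k]_(pathb o (ph x) (ph y))) != 0.
  by apply: const1_nz; rewrite p.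
by move: Fh nz; rewrite h0 F0 // => <-; rewrite eqxx.
Qed.

Variables (B B' : premod C).
Hypotheses (hB : is_BL L B) (hB' : is_BL L B').

Definition eP (i : int) (c : k) :=
  c != 0 /\
  (forall x y (a : Defs.hom C x y), L x -> L y -> ph x = i -> ph y = i + 1 -> a != 0 ->
     beta B a = c * beta B' a) /\
  (forall x y (a : Defs.hom C x y), L x -> L y -> ph x = i + 1 -> ph y = i -> a != 0 ->
     beta B a * c = beta B' a).

Definition ee (i : int) : k := epsilon (inhabits 1) (eP i).

Lemma ee_spec i : eP i (ee i).
Proof.
rewrite /ee; apply: epsilon_spec.
case: (classic (exists x, L x /\ ph x = i)) => [[x0 [Lx0 px0]]|nx]; last first.
  exists 1; split; first exact: oner_neq0.
  by split => x y a Lx Ly px py; exfalso; apply: nx; [exists x | exists y].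
case: (classic (exists x, L x /\ ph x = i + 1)) => [[y0 [Ly0 py0]]|ny]; last first.
  exists 1; split; first exact: oner_neq0.
  by split => x y a Lx Ly px py; exfalso; apply: ny; [exists y | exists x].
case oi: (o i).
  have p01 : pathb o (ph x0) (ph y0).
    apply/pathb_char; rewrite px0 py0; split => m h1 h2; last by lia.
    by have -> : m = i by lia.
  have p10 : ~~ pathb o (i + 1) i.
    apply/negP => /pathb_char [_ h]; have H1 : i <= i by lia.
    have H2 : i < i + 1 by lia.
    by have := h i H1 H2; rewrite oi.
  have [a0 Fa0] := hom_one Lx0 Ly0.
  have a0nz := h_nz Lx0 Ly0 p01 Fa0.
  have b1 := beta_nz hB Lx0 Ly0 a0nz; have b2 := beta_nz hB' Lx0 Ly0 a0nz.
  exists (beta B a0 / beta B' a0); split; first by rewrite mulf_neq0 ?invr_neq0.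
  split.
    move=> x y a Lx Ly px py anz.
    have ex : x = x0 by apply: hinj; rewrite ?px ?px0.
    have ey : y = y0 by apply: hinj; rewrite ?py ?py0.
    subst x y; rewrite (hom_scal a Lx0 Ly0 p01 Fa0) (beta_Z hB) (beta_Z hB').
    by field.
  move=> x y a Lx Ly px py anz; exfalso; move/negP: anz; apply.
  by apply/eqP; apply: hom_zero; rewrite ?px ?py.
have p10 : pathb o (ph y0) (ph x0).
  apply/pathb_char; rewrite px0 py0; split => m h1 h2; first by lia.
  have -> : m = i by lia.
  by rewrite oi.
have p01 : ~~ pathb o i (i + 1).
  apply/negP => /pathb_char [h _]; have H1 : i <= i by lia.
  have H2 : i < i + 1 by lia.
  by have := h i H1 H2; rewrite oi.
have [a0 Fa0] := hom_one Ly0 Lx0.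
have a0nz := h_nz Ly0 Lx0 p10 Fa0.
have b1 := beta_nz hB Ly0 Lx0 a0nz; have b2 := beta_nz hB' Ly0 Lx0 a0nz.
exists (beta B' a0 / beta B a0); split; first by rewrite mulf_neq0 ?invr_neq0.
split.
  move=> x y a Lx Ly px py anz; exfalso; move/negP: anz; apply.
  by apply/eqP; apply: hom_zero; rewrite ?px ?py.
move=> x y a Lx Ly px py anz.
have ex : x = y0 by apply: hinj; rewrite ?px ?py0.
have ey : y = x0 by apply: hinj; rewrite ?py ?px0.
subst x y; rewrite (hom_scal a Ly0 Lx0 p10 Fa0) (beta_Z hB) (beta_Z hB').
by field.
Qed.

Variable r : int -> k.
Hypothesis rS : forall i, r (i + 1) = r i * ee i.

Lemma Kmain n : forall x y (f : Defs.hom C x y), L x -> L y ->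
  `|ph y - ph x|%N = n -> f != 0 -> beta B f * r (ph x) = r (ph y) * beta B' f.
Proof.
elim: n => [|n IH] x y f Lx Ly hn fnz.
  have e : ph x = ph y by lia.
  have exy := hinj Lx Ly e; subst y.
  have pxx : pathb o (ph x) (ph x) by apply/pathb_char; split => m *; lia.
  rewrite (hom_scal f Lx Lx pxx (hid Lx)) (beta_Z hB) (beta_Z hB') (beta_id hB Lx) (beta_id hB' Lx).
  by ring.
have p : pathb o (ph x) (ph y).
  case p: (pathb o (ph x) (ph y)) => //.
  have np : ~~ pathb o (ph x) (ph y) by rewrite p.
  by move: fnz; rewrite (hom_zero f Lx Ly np) eqxx.
have [h1 h2] := (pathb_char o _ _).1 p.
have [hlt|hgt] : ph x < ph y \/ ph y < ph x by lia.
  have oi : o (ph x) by apply: h1; lia.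
  have vz : lvert sh (ph x + 1) by apply: (lvert_int (hvert Lx) (hvert Ly)); lia.
  have [z [Lz pz]] := hsurj vz.
  have pxz : pathb o (ph x) (ph z).
    apply/pathb_char; rewrite pz; split => m *; last by lia.
    by have -> : m = ph x by lia.
  have pzy : pathb o (ph z) (ph y).
    by apply/pathb_char; rewrite pz; split => m *; [apply: h1; lia | lia].
  have [a Fa] := hom_one Lx Lz; have [g Fg] := hom_one Lz Ly.
  have Fga : @F x y (Defs.comp g a) = const_mx 1 by rewrite hcomp // Fg Fa qcomp_one.
  have gnz := h_nz Lz Ly pzy Fg; have anz := h_nz Lx Lz pxz Fa.
  have hn' : `|ph y - ph z|%N = n by lia.
  have IHg := IH z y g Lz Ly hn' gnz.
  have [_ [E1 _]] := ee_spec (ph x).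
  have Ea := E1 x z a Lx Lz erefl pz anz.
  rewrite (hom_scal f Lx Ly p Fga) (beta_Z hB) (beta_Z hB') (beta_comp hB _ _ Lx Lz).
  rewrite (beta_comp hB' _ _ Lx Lz) Ea.
  have rz : r (ph z) = r (ph x) * ee (ph x) by rewrite pz rS.
  rewrite rz in IHg.
  set s := sc _; set ba := beta B' a; set bg := beta B g; set bg' := beta B' g.
  set e := ee _; set rx := r (ph x); set ry := r (ph y).
  transitivity (s * ba * (bg * (rx * e))); first by ring.
  by rewrite IHg /ry /bg'; ring.
have vz : lvert sh (ph x - 1) by apply: (lvert_int (hvert Ly) (hvert Lx)); lia.
have [z [Lz pz]] := hsurj vz.
have pxz : pathb o (ph x) (ph z).
  apply/pathb_char; rewrite pz; split => m *; first by lia.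
  by apply: h2; lia.
have pzy : pathb o (ph z) (ph y).
  by apply/pathb_char; rewrite pz; split => m *; [lia | apply: h2; lia].
have [a Fa] := hom_one Lx Lz; have [g Fg] := hom_one Lz Ly.
have Fga : @F x y (Defs.comp g a) = const_mx 1 by rewrite hcomp // Fg Fa qcomp_one.
have gnz := h_nz Lz Ly pzy Fg; have anz := h_nz Lx Lz pxz Fa.
have hn' : `|ph y - ph z|%N = n by lia.
have IHg := IH z y g Lz Ly hn' gnz.
have [_ [_ E2]] := ee_spec (ph z).
have pxz1 : ph x = ph z + 1 by lia.
have Ea := E2 x z a Lx Lz pxz1 erefl anz.
rewrite (hom_scal f Lx Ly p Fga) (beta_Z hB) (beta_Z hB') (beta_comp hB _ _ Lx Lz).
have rx : r (ph x) = r (ph z) * ee (ph z) by rewrite pxz1 rS.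
rewrite (beta_comp hB' _ _ Lx Lz) -Ea rx.
set s := sc _; set ba := beta B a; set bg := beta B g; set bg' := beta B' g.
set e := ee _; set rz := r (ph z); set ry := r (ph y).
transitivity (s * ba * e * (bg * rz)); first by ring.
by rewrite IHg /ry /bg'; ring.
Qed.

Hypothesis rnz : forall i, r i != 0.

Lemma iso_r : mod_iso B B'.
Proof.
have mB : is_module B by case: hB.
have mB' : is_module B' by case: hB'.
exists (fun x v => (cf (bv B x) v * r (ph x)) *: bv B' x); split.
  move=> x; split.
    by move=> c u v; rewrite cfD cfZ mulrDl scalerDl scalerA mulrA.
  case: (classic (L x)) => Lx.
    exists (fun w => (cf (bv B' x) w / r (ph x)) *: bv B x).
      move=> v /=; rewrite cfZ cf_self ?(bv_nz hB' Lx) // mulr1 mulfK //.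
      by rewrite -(vexp hB v Lx).
    move=> w /=; rewrite cfZ cf_self ?(bv_nz hB Lx) // mulr1 divfK //.
    by rewrite -(vexp hB' w Lx).
  exists (fun _ => 0).
    by move=> v; rewrite (vnL hB v Lx).
  by move=> w; rewrite (vnL hB' w Lx); apply: (vnL hB' _ Lx).
move=> x y f v.
case: (classic (L x)) => Lx; last first.
  by rewrite [X in _ = X](vnL hB' _ Lx); apply: (vnL hB' _ Lx).
case: (classic (L y)) => Ly; last first.
  by rewrite (vnL hB v Ly) (mact_f0 mB) cf0 cf0 !mul0r !scale0r (mact_f0 mB').
case: (eqVneq f 0) => [->|fnz].
  by rewrite !mact_0f // cf0 mul0r scale0r.
rewrite (vexp hB v Ly) !mactZ // (mac_b hB f Lx) (mac_b hB' f Lx).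
rewrite !cfZ !cf_self ?(bv_nz hB Lx) ?(bv_nz hB' Ly) ?(bv_nz hB Ly) // !scalerA.
congr (_ *: _).
have K := @Kmain _ x y f Lx Ly (erefl _) fnz.
set c := cf _ v; set bf := beta B f; set bf' := beta B' f.
transitivity (c * (bf * r (ph x))); first by ring.
by rewrite K /bf'; ring.
Qed.
End Line.

Lemma BL_unique (k : fieldType) (C : kcat k) (L : obj C -> Prop) (B B' : premod C) :
  is_line L -> is_BL L B -> is_BL L B' -> mod_iso B B'.
Proof.
case=> _ [sh [o [ph [F [_ [hvert [hinj [hsurj [hF [hcomp hid]]]]]]]]]] hB hB'.
have ES := ee_spec hinj hF hB hB'.
have [r [rnz rS]] := @exists_r k (ee L ph B B') (fun i => (ES i).1).
exact: (iso_r hvert hinj hsurj hF hcomp hid hB hB' rS rnz).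
Qed.

Lemma klin0 (k : fieldType) (U V : lmodType k) (f : U -> V) : klinear f -> f 0 = 0.
Proof.
move=> lin; have := lin 1 0 0; rewrite !scale1r addr0 => h.
by apply: (@addrI _ (f 0)); rewrite addr0 -h.
Qed.

Lemma klinZ (k : fieldType) (U V : lmodType k) (f : U -> V) c u : klinear f -> f (c *: u) = c *: f u.
Proof. by move=> lin; have := lin c u 0; rewrite !addr0 klin0 // addr0. Qed.

Lemma BL_supp (k : fieldType) (C : kcat k) (L : obj C -> Prop) (B : premod C) x :
  is_BL L B -> (L x <-> exists v : mval B x, v != 0).
Proof.
move=> hB; split => [Lx|[v vnz]]; first by exists (bv B x); exact: (bv_nz hB Lx).
case: (classic (L x)) => // nL; by move: vnz; rewrite (vnL hB v nL) eqxx.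
Qed.

Lemma twist_BL (k : fieldType) (C : kcat k) (L : obj C -> Prop) (B : premod C) (F : kfun C) :
  is_kauto F -> (forall x, L x <-> L (fobj F x)) -> is_BL L B -> is_BL L (twist B F).
Proof.
move=> [_ [hlin [hcomp hid]]] hL [[m1 [m2 [m3 m4]]] [d1 [d0 hnz]]].
split; first split.
- by move=> x y f; apply: m1.
- split.
    move=> x y a f f' v /=; have [lin _] := hlin x y.
    by rewrite /= lin m2.
  split.
    by move=> x y z g f v /=; rewrite hcomp m3.
  by move=> x v /=; rewrite hid m4.
split; first by move=> x /hL; apply: d1.
split; first by move=> x nL; apply: d0 => h; apply: nL; apply/hL.
move=> x y f Lx Ly fnz.
have [lin [g gK _]] := hlin x y.
have fnz' : fmor F f != 0.
  apply/eqP => E0; move/eqP: fnz; apply; rewrite -[f]gK E0.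
  by have := gK 0; rewrite (klin0 lin).
have [v hv] := hnz _ _ (fmor F f) ((hL x).1 Lx) ((hL y).1 Ly) fnz'.
by exists v.
Qed.

Section Grp.
Variables (k : fieldType) (C : kcat k) (G : autgroup C).

Lemma fobj_mul (g h : gT G) x : fobj (gact (gmul g h)) x = fobj (gact g) (fobj (gact h) x).
Proof.
have := f_equal (@projT1 _ _) (gact_mul g h (idm x)).
by case.
Qed.

Lemma fobj_one x : fobj (gact (gone G)) x = x.
Proof.
have := f_equal (@projT1 _ _) (gact_one G (idm x)).
by case.
Qed.

Lemma inv_l (g : gT G) x : fobj (gact (ginv g)) (fobj (gact g) x) = x.
Proof. by rewrite -fobj_mul gmulV fobj_one. Qed.

Lemma inv_r (g : gT G) y : fobj (gact g) (fobj (gact (ginv g)) y) = y.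
Proof.
have [[h hK1 _] _] := gact_auto (ginv g).
apply: (can_inj hK1).
by rewrite inv_l.
Qed.
End Grp.

Unset Implicit Arguments.
Local Close Scope ring_scope.

Theorem lemma3p2 (k : closedFieldType) (C : kcat k) (G : autgroup C)
  (L : obj C -> Prop) (B : premod C) :
  locally_bounded C -> connected C -> acts_freely_on_ind G ->
  is_line L -> is_BL L B ->
  forall g : gT G, stab_line L g <-> stab_mod B g.
Proof.
move=> _ _ _ hL hB g; split.
  move=> hs; rewrite /stab_mod /gtwist.
  apply: (BL_unique hL _ hB); apply: (twist_BL (gact_auto _) _ hB).
  move=> x; split.
    move=> Lx; have [x' [Lx' ex']] := (hs x).1 Lx.
    by rewrite -ex' inv_l.
  move=> Lx; apply/(hs x).2; exists (fobj (gact (ginv g)) x); split => //.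
  exact: inv_r.
move=> [phi [hphi hnat]].
have key : forall z, L (fobj (gact (ginv g)) z) <-> L z.
  move=> z; have [lin [h hK1 hK2]] := hphi z.
  split => [/(BL_supp _ hB) [v vnz] | /(BL_supp _ hB) [w wnz]]; apply/(BL_supp _ hB).
    exists (phi z v); apply/eqP => E; move/eqP: vnz; apply.
    rewrite -[v]hK1 E; by have := hK1 0%R; rewrite (klin0 lin).
  exists (h w); apply/eqP => E; move/eqP: wnz; apply.
  by rewrite -[w]hK2 E (klin0 lin).
move=> y; split.
  move=> Ly; exists (fobj (gact (ginv g)) y); split; [exact/key | exact: inv_r].
move=> [x [Lx <-]]; apply/key; by rewrite inv_l.
Qed.
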